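(* A causal graph dynamics $F:\mathcal{G}_{\Sigma,\Delta,\pi}\to\mathcal{G}_{\Sigma,\Delta,\pi}$ is monotonic for the subgraph order if and only if it is a left Kan extension, i.e. there exist $r\ge 0$ and a monotonic function $f:\mathcal{D}^r_{\Sigma,\Delta,\pi}\to\mathcal{G}_{\Sigma,\Delta,\pi}$ (subdisk order to subgraph order) such that for every graph $G$ the set $\{f(D)\mid D\in\mathcal{D}^r_{\Sigma,\Delta,\pi},\ i(D)\subseteq G\}$ has a supremum in $(\mathcal{G}_{\Sigma,\Delta,\pi},\subseteq)$ equal to $F(G)$, where $i((H,c))=H$ is the pointer dropping function.
   Context: Fix an uncountably infinite set $\mathcal{V}$ of vertex names, sets $\Sigma,\Delta$ and a finite port set $\pi$. A graph $G$: countable $V(G)\subset\mathcal{V}$; a set $E(G)$ of pairwise disjoint two-element subsets of $V(G)\times\pi$; partial labelings $\sigma(G):V(G)\rightharpoonup\Sigma$, $\delta(G):E(G)\rightharpoonup\Delta$. $\mathcal{G}_{\Sigma,\Delta,\pi}$ is the set of graphs. Subgraph order $G\subseteq H$: componentwise inclusion of $V,E,\sigma,\delta$ (partial functions as sets of pairs); for pointed graphs $(G,v)\subseteq(H,u)$ iff $G\subseteq H$ and $v=u$ (subdisk order). Consistency of two graphs: edge sets jointly pairwise disjoint and labelings agreeing on common domains; union and intersection are componentwise; $\varnothing$ is the empty graph. With $d_G$ the shortest-path distance and $B_G(c,r)$ the ball, the disk $G^r_c=(H,c)$ has $V(H)=B_G(c,r+1)$, $E(H)$ = edges of $G$ with an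 endpoint in $B_G(c,r)$, $\sigma(H)=\sigma(G)|_{B_G(c,r)}$, $\delta(H)=\delta(G)|_{E(H)}$; $\mathcal{D}^r_{\Sigma,\Delta,\pi}$ is the set of radius-$r$ disks. Renamings are bijections of $\mathcal{V}$ acting naturally on edges, graphs and pointed graphs. A local rule of radius $r$ is $f:\mathcal{D}^r\to\mathcal{G}$ satisfying: (1) every renaming $R$ has a renaming $R'$ with $f\circ R=R'\circ f$; (2) families of disks with empty intersection have images with empty intersection; (3) $|V(f(D))|$ uniformly bounded; (4) $f(G^r_u)$ and $f(G^r_v)$ consistent for all $G,u,v$. A CGD is $F(G)=\bigcup_{v\in V(G)}f(G^r_v)$ for some local rule $f$. *)

(* Defs.v *)
(* sets are predicates, partial functions are option-valued. *)
From Stdlib Require Import List Arith.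
Set Implicit Arguments.

Section CGD.
Variables (V Sigma Delta Pi : Type).

Definition endpt := (V * Pi)%type.

Definition countable_set (P : V -> Prop) : Prop :=
  exists g : V -> nat, forall x y, P x -> P y -> g x = g y -> x = y.

(* A graph.  An (undirected) edge {a,b} is represented by the symmetric,
   irreflexive relation gE; edge labels gdel are symmetric. *)
Record graph := Graph {
  gV   : V -> Prop;
  gE   : endpt -> endpt -> Prop;
  gsig : V -> option Sigma;
  gdel : endpt -> endpt -> option Delta;
  gV_countable : countable_set gV;
  gE_sym  : forall a b, gE a b -> gE b a;
  gE_irr  : forall a, ~ gE a a;                         (* two-element subsets *)
  gE_V    : forall a b, gE a b -> gV (fst a) /\ gV (fst b);
  gE_disj : forall a b c, gE a b -> gE a c -> b = c;    (* pairwise disjoint *)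
  gsig_dom : forall v s, gsig v = Some s -> gV v;
  gdel_sym : forall a b, gdel a b = gdel b a;
  gdel_dom : forall a b d, gdel a b = Some d -> gE a b
}.

Definition subgraph (G H : graph) : Prop :=
  (forall v, gV G v -> gV H v) /\
  (forall a b, gE G a b -> gE H a b) /\
  (forall v s, gsig G v = Some s -> gsig H v = Some s) /\
  (forall a b d, gdel G a b = Some d -> gdel H a b = Some d).

Definition pgraph := (graph * V)%type.
Definition psub (D1 D2 : pgraph) : Prop :=
  subgraph (fst D1) (fst D2) /\ snd D1 = snd D2.

Definition consistent (G H : graph) : Prop :=
  (forall a b c, (gE G a b \/ gE H a b) -> (gE G a c \/ gE H a c) -> b = c) /\
  (forall v s t, gsig G v = Some s -> gsig H v = Some t -> s = t) /\
  (forall a b d e, gdel G a b = Some d -> gdel H a b = Some e -> d = e).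

Definition inter_empty (S : graph -> Prop) : Prop :=
  (forall v, ~ (forall H, S H -> gV H v)) /\
  (forall a b, ~ (forall H, S H -> gE H a b)) /\
  (forall v s, ~ (forall H, S H -> gsig H v = Some s)) /\
  (forall a b d, ~ (forall H, S H -> gdel H a b = Some d)).

Definition is_union (S : graph -> Prop) (U : graph) : Prop :=
  (forall v, gV U v <-> exists H, S H /\ gV H v) /\
  (forall a b, gE U a b <-> exists H, S H /\ gE H a b) /\
  (forall v s, gsig U v = Some s <-> exists H, S H /\ gsig H v = Some s) /\
  (forall a b d, gdel U a b = Some d <-> exists H, S H /\ gdel H a b = Some d).

Definition is_lub (S : graph -> Prop) (U : graph) : Prop :=
  (forall H, S H -> subgraph H U) /\
  (forall U', (forall H, S H -> subgraph H U') -> subgraph U U').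

Definition adj (G : graph) (u w : V) : Prop :=
  exists p q, gE G (u, p) (w, q).

Inductive walk (G : graph) (u : V) : V -> nat -> Prop :=
  | walk0 : gV G u -> walk G u u 0
  | walkS : forall v w n, walk G u v n -> adj G v w -> walk G u w (S n).

Definition ball (G : graph) (c : V) (n : nat) (v : V) : Prop :=
  exists k, k <= n /\ walk G c v k.

Definition disk_of (G : graph) (r : nat) (c : V) (H : graph) : Prop :=
  (forall v, gV H v <-> ball G c (S r) v) /\
  (forall a b, gE H a b <-> (gE G a b /\ (ball G c r (fst a) \/ ball G c r (fst b)))) /\
  (forall v s, gsig H v = Some s <-> (gsig G v = Some s /\ ball G c r v)) /\
  (forall a b d, gdel H a b = Some d <-> (gdel G a b = Some d /\ gE H a b)).

Definition is_disk (r : nat) (D : pgraph) : Prop :=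
  exists G, gV G (snd D) /\ disk_of G r (snd D) (fst D).
Definition disk (r : nat) := { D : pgraph | is_disk r D }.

Definition ptr_drop (r : nat) (D : disk r) : graph := fst (proj1_sig D).

Definition renaming (R : V -> V) : Prop :=
  exists R1 : V -> V, (forall x, R1 (R x) = x) /\ (forall x, R (R1 x) = x).

Definition ren_endpt (R : V -> V) (a : endpt) : endpt := (R (fst a), snd a).

Definition renamed (R : V -> V) (G H : graph) : Prop :=
  (forall v, gV H (R v) <-> gV G v) /\
  (forall a b, gE H (ren_endpt R a) (ren_endpt R b) <-> gE G a b) /\
  (forall v, gsig H (R v) = gsig G v) /\
  (forall a b, gdel H (ren_endpt R a) (ren_endpt R b) = gdel G a b).

Definition renamed_p (R : V -> V) (D D' : pgraph) : Prop :=
  renamed R (fst D) (fst D') /\ snd D' = R (snd D).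

Definition local_rule (r : nat) (f : disk r -> graph) : Prop :=
  (forall R, renaming R -> exists R', renaming R' /\
     forall D D' : disk r, renamed_p R (proj1_sig D) (proj1_sig D') ->
       renamed R' (f D) (f D')) /\
  (forall Fam : disk r -> Prop,
     inter_empty (fun H => exists D, Fam D /\ H = ptr_drop D) ->
     inter_empty (fun H => exists D, Fam D /\ H = f D)) /\
  (exists b : nat, forall D, exists l : list V, length l <= b /\
     forall x, gV (f D) x -> In x l) /\
  (forall G u v (D1 D2 : disk r),
     gV G u -> gV G v ->
     snd (proj1_sig D1) = u -> disk_of G r u (ptr_drop D1) ->
     snd (proj1_sig D2) = v -> disk_of G r v (ptr_drop D2) ->
     consistent (f D1) (f D2)).

Definition is_CGD (F : graph -> graph) : Prop :=
  exists (r : nat) (f : disk r -> graph), local_rule f /\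
    forall G, is_union
      (fun H => exists v (D : disk r), gV G v /\ snd (proj1_sig D) = v /\
                  disk_of G r v (ptr_drop D) /\ H = f D) (F G).

Definition monotonic_graph_fun (F : graph -> graph) : Prop :=
  forall G H, subgraph G H -> subgraph (F G) (F H).

Definition left_kan_extension (F : graph -> graph) : Prop :=
  exists (r : nat) (f : disk r -> graph),
    (forall D1 D2 : disk r, psub (proj1_sig D1) (proj1_sig D2) -> subgraph (f D1) (f D2)) /\
    forall G, is_lub (fun H => exists D : disk r, subgraph (ptr_drop D) G /\ H = f D) (F G).

End CGD.

Definition uncountable (T : Type) : Prop :=
  ~ exists g : T -> nat, forall x y, g x = g y -> x = y.

Definition finite_type (T : Type) : Prop :=
  exists l : list T, forall x, In x l.

(* Main.v *)
Require Import Defs.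
From Stdlib Require Import List Arith Lia.
Set Implicit Arguments.

Section Aux.
Variables (V Sigma Delta Pi : Type).
Notation graph := (graph V Sigma Delta Pi).

Lemma walk_end (G : graph) u w k : walk G u w k -> gV G w.
Proof.
  induction 1 as [H0|v w n Hw IH [p [q Hq]]]; auto.
  exact (proj2 (gE_V G _ _ Hq)).
Qed.

Lemma walk_start (G : graph) u w k : walk G u w k -> gV G u.
Proof. induction 1; auto. Qed.

Lemma disk_sub (G H : graph) r c : disk_of G r c H -> subgraph H G.
Proof.
  intros [HV [HE [Hs Hd]]]. repeat split.
  - intros v Hv. apply HV in Hv. destruct Hv as [k [_ Hk]]. exact (walk_end Hk).
  - intros a b Hab. apply HE in Hab. tauto.
  - intros v s Hv. apply Hs in Hv. tauto.
  - intros a b d Hab. apply Hd in Hab. tauto.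
Qed.

Lemma walk_GH (G H : graph) r c : disk_of G r c H -> gV G c ->
  forall w k, walk G c w k -> k <= S r -> walk H c w k.
Proof.
  intros Hd Hc w k Hw. induction Hw as [H0|v w n Hw IH [p [q Hq]]]; intros Hk.
  - constructor. apply (proj1 Hd). exists 0. split; [lia|]. constructor; auto.
  - apply walkS with v; [apply IH; lia|]. exists p, q.
    apply (proj1 (proj2 Hd)). split; auto. left. exists n. split; [lia|]. exact Hw.
Qed.

Lemma walk_HG (G H : graph) r c : disk_of G r c H ->
  forall w k, walk H c w k -> walk G c w k.
Proof.
  intros Hd w k Hw. destruct (disk_sub Hd) as [SV [SE _]].
  induction Hw as [H0|v w n Hw IH [p [q Hq]]].
  - constructor. auto.
  - apply walkS with v; auto. exists p, q. auto.
Qed.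

Lemma ball_eq (G H : graph) r c : disk_of G r c H -> gV G c ->
  forall k w, k <= S r -> (ball H c k w <-> ball G c k w).
Proof.
  intros Hd Hc k w Hk. split; intros [j [Hj Hw]]; exists j; split; auto.
  - exact (walk_HG Hd Hw).
  - apply (walk_GH Hd Hc Hw). lia.
Qed.

Lemma disk_self (G H : graph) r c : disk_of G r c H -> gV G c -> disk_of H r c H.
Proof.
  intros Hd Hc. pose proof Hd as [HV [HE [Hs Hdl]]]. split; [|split; [|split]].
  - intros v. rewrite HV. symmetry. apply (ball_eq Hd Hc); auto.
  - intros a b. split.
    + intros Hab. split; auto. pose proof Hab as Hab'. apply HE in Hab'.
      destruct Hab' as [_ [B|B]]; [left|right]; apply (ball_eq Hd Hc); auto.
    + intros [X _]; exact X.
  - intros v s. split.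
    + intros Hv. split; auto. apply Hs in Hv. apply (ball_eq Hd Hc); [lia|]. tauto.
    + intros [X _]; exact X.
  - intros a b d. split.
    + intros Hab. split; auto. eapply gdel_dom; exact Hab.
    + intros [X _]; exact X.
Qed.

Lemma union_ub (S : graph -> Prop) U H : is_union S U -> S H -> subgraph H U.
Proof.
  intros [UV [UE [Us Ud]]] HS. repeat split.
  - intros v Hv. apply UV. eauto.
  - intros a b Hv. apply UE. eauto.
  - intros v s Hv. apply Us. eauto.
  - intros a b d Hv. apply Ud. eauto.
Qed.

Lemma union_least (S : graph -> Prop) U U' : is_union S U ->
  (forall H, S H -> subgraph H U') -> subgraph U U'.
Proof.
  intros [UV [UE [Us Ud]]] Hb. repeat split.
  - intros v Hv. apply UV in Hv. destruct Hv as [H [HS Hv]]. apply (Hb H HS). auto.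
  - intros a b Hv. apply UE in Hv. destruct Hv as [H [HS Hv]]. apply (Hb H HS). auto.
  - intros v s Hv. apply Us in Hv. destruct Hv as [H [HS Hv]]. apply (Hb H HS). auto.
  - intros a b d Hv. apply Ud in Hv. destruct Hv as [H [HS Hv]]. apply (Hb H HS). auto.
Qed.

Lemma subgraph_trans (A B C : graph) : subgraph A B -> subgraph B C -> subgraph A C.
Proof.
  intros [a1 [a2 [a3 a4]]] [b1 [b2 [b3 b4]]]. repeat split; auto.
Qed.

End Aux.

Theorem corollary2p10 (V Sigma Delta Pi : Type)
  (HV : uncountable V) (HPi : finite_type Pi)
  (F : graph V Sigma Delta Pi -> graph V Sigma Delta Pi) :
  is_CGD F -> (monotonic_graph_fun F <-> left_kan_extension F).
Proof.
  intros [r [f [_ HF]]]. split.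
  - intros Hmon. exists r, (fun D => F (ptr_drop D)). split.
    + intros D1 D2 [Hs _]. apply Hmon. exact Hs.
    + intros G. split.
      * intros H [D [HD ->]]. apply Hmon. exact HD.
      * intros U' HU'. eapply union_least; [exact (HF G)|].
        intros H [v [D [Hv [Hsnd [Hdk ->]]]]].
        apply subgraph_trans with (F (ptr_drop D)).
        -- eapply union_ub; [exact (HF (ptr_drop D))|].
           exists v, D. split; [|split; [auto|split; [|reflexivity]]].
           ++ apply (proj1 Hdk). exists 0. split; [lia|]. constructor. auto.
           ++ exact (disk_self Hdk Hv).
        -- apply HU'. exists D. split; auto. exact (disk_sub Hdk).
  - intros [r' [f' [_ Hlub]]] G H Hs.
    destruct (Hlub G) as [_ Hl]. apply Hl.
    intros K [D [HD ->]]. apply (proj1 (Hlub H)). exists D. split; auto.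
    exact (subgraph_trans HD Hs).
Qed.
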